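(* Let $U$ be a unicyclic graph of order $n\ge 5$, and let $X$ be an eigenvector of the adjacency matrix $A(U^c)$ corresponding to its least eigenvalue $\lambda_{\min}(U^c)$. Then $X$ has at least two positive entries and at least two negative entries.
   Context: A unicyclic graph is a connected graph containing exactly one cycle. $U^c$ denotes the complement of $U$, and $\lambda_{\min}(G)$ denotes the least eigenvalue of the adjacency matrix of a graph $G$. *)

(* Defs.v *)
From HB Require Import structures.
From mathcomp Require Import all_boot all_order all_algebra.
Set Implicit Arguments. Unset Strict Implicit. Unset Printing Implicit Defensive.
Import Order.TTheory GRing.Theory Num.Theory.
Local Open Scope ring_scope.

Definition simple_graph (T : finType) (e : rel T) : Prop :=
  irreflexive e /\ symmetric e.

Definition compl_graph (T : finType) (e : rel T) : rel T :=
  [rel x y | (x != y) && ~~ e x y].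

Definition adj_mx (R : pzRingType) (n : nat) (e : rel 'I_n) : 'M[R]_n :=
  \matrix_(i, j) (e i j)%:R.

Definition connected_graph (T : finType) (e : rel T) : Prop :=
  forall x y : T, connect e x y.

Definition is_graph_cycle (T : finType) (e : rel T) (s : seq T) : bool :=
  [&& uniq s, (2 < size s)%N & cycle e s].

Definition cycle_edges (T : finType) (s : seq T) : {set {set T}} :=
  [set [set x; next s x] | x in s].

(* Unicyclic: connected, with exactly one cycle (cycles identified as
   subgraphs, i.e. by their edge sets). *)
Definition unicyclic (T : finType) (e : rel T) : Prop :=
  connected_graph e /\
  exists C : {set {set T}},
    (exists s, is_graph_cycle e s /\ cycle_edges s = C) /\
    (forall s, is_graph_cycle e s -> cycle_edges s = C).

Definition least_eigenvalue (R : realFieldType) (n : nat) (A : 'M[R]_n) (lam : R)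
  : Prop :=
  eigenvalue A lam /\ (forall mu, eigenvalue A mu -> lam <= mu).

(* Main.v *)
Require Import Defs.
From HB Require Import structures.
From mathcomp Require Import all_boot all_order all_algebra.
From mathcomp Require Import complex.
From mathcomp Require Import ring lra.
Import Order.TTheory GRing.Theory Num.Theory Num.Def.
Set Implicit Arguments. Unset Strict Implicit. Unset Printing Implicit Defensive.
Local Open Scope ring_scope.

Lemma uni_vert (T : finType) (e : rel T) s1 s2 :
  unicyclic e -> is_graph_cycle e s1 -> is_graph_cycle e s2 -> {subset s2 <= s1}.
Proof.
case=> _ [C [_ HC]] c1 c2 x xs2.
have E : cycle_edges s2 = cycle_edges s1 by rewrite (HC _ c1) (HC _ c2).
have : [set x; next s2 x] \in cycle_edges s1.
  by rewrite -E; apply/imsetP; exists x.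
case/imsetP => y ys1 Hxy.
have : x \in [set y; next s1 y] by rewrite -Hxy set21.
by rewrite !inE => /orP[/eqP->|/eqP->] //; rewrite mem_next.
Qed.

Lemma tri_cycle (T : finType) (e : rel T) a b c :
  symmetric e -> a != b -> b != c -> a != c -> e a b -> e b c -> e a c ->
  is_graph_cycle e [:: a; b; c].
Proof.
move=> sym ab bc ac eab ebc eac.
by rewrite /is_graph_cycle /= !inE !negb_or ab ac bc /= eab ebc (sym c a) eac.
Qed.

Lemma quad_cycle (T : finType) (e : rel T) a b c d :
  symmetric e -> a != b -> a != c -> a != d -> b != c -> b != d -> c != d ->
  e a b -> e b c -> e c d -> e d a ->
  is_graph_cycle e [:: a; b; c; d].
Proof.
move=> sym ab ac ad bc bd cd eab ebc ecd eda.
by rewrite /is_graph_cycle /= !inE !negb_or ab ac ad bc bd cd /= eab ebc ecd eda.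
Qed.

Lemma outside (n : nat) (s : seq 'I_n) : (size s < n)%N -> exists z, z \notin s.
Proof.
move=> Hs; apply/existsP; rewrite -negb_forall; apply/negP => /forallP H.
have : (#|'I_n| <= #|s|)%N.
  by apply: subset_leq_card; apply/subsetP => z _; apply: H.
rewrite card_ord => H2; have := leq_trans H2 (card_size s).
by rewrite leqNgt Hs.
Qed.

Lemma tri_ext n (e : rel 'I_n) a b c : simple_graph e -> unicyclic e -> (3 < n)%N ->
  (forall i j k, e i k -> j != i -> j != k -> e i j || e k j) ->
  a != b -> b != c -> a != c -> e a b -> e b c -> e a c -> False.
Proof.
move=> [irr sym] uni n4 H ab bc ac eab ebc eac.
have [d dn] := (@outside n [:: a; b; c]) n4.
have T0 := tri_cycle sym ab bc ac eab ebc eac.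
have K : forall p q, p \in [:: a; b; c] -> q \in [:: a; b; c] -> p != q ->
    e p q -> e p d -> e q d -> False.
  move=> p q pin qin pq epq epd eqd.
  have pd : p != d by apply: contraNneq dn => <-.
  have qd : q != d by apply: contraNneq dn => <-.
  have Tn := tri_cycle sym pq qd pd epq eqd epd.
  by move: dn; rewrite (uni_vert uni T0 Tn) // !inE eqxx !orbT.
move: dn; rewrite !inE !negb_or => /and3P [da db dc].
have := H a d b eab da db; have := H b d c ebc db dc; have := H a d c eac da dc.
have ina : a \in [:: a; b; c] by rewrite !inE eqxx.
have inb : b \in [:: a; b; c] by rewrite !inE eqxx !orbT.
have inc : c \in [:: a; b; c] by rewrite !inE eqxx !orbT.
case E1: (e a d); case E2: (e b d); case E3: (e c d) => //= _ _ _.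
- exact: (K a b).
- exact: (K a b).
- exact: (K a c).
- exact: (K b c).
Qed.

Lemma p3 n (e : rel 'I_n) : simple_graph e -> unicyclic e -> (4 < n)%N ->
  exists i j k, [/\ e i k, ~~ e i j, ~~ e k j, j != i & j != k].
Proof.
move=> sg uni n5; have [irr sym] := sg.
case: (boolP [exists i, exists j, exists k,
   [&& e i k, ~~ e i j, ~~ e k j, j != i & j != k]]).
  case/existsP => i /existsP [j /existsP [k /and5P [? ? ? ? ?]]].
  by exists i, j, k.
rewrite negb_exists => /forallP Hn.
have H : forall i j k, e i k -> j != i -> j != k -> e i j || e k j.
  move=> i j k eik ji jk; move: (Hn i); rewrite negb_exists => /forallP /(_ j).
  rewrite negb_exists => /forallP /(_ k).
  by rewrite eik ji jk /= !andbT negb_and !negbK.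
have n4 : (3 < n)%N by apply: ltnW.
exfalso.
have uni' := uni; case: uni' => _ [C [[s [cs _]] _]].
move: cs; case: s => [|c0 [|c1 [|c2 r]]]; try by case/and3P.
case: r => [|c3 r].
  rewrite /is_graph_cycle /= !inE !negb_or.
  case/and5P => [/and3P [/andP [c01 c02] c12 _] e01 e12 e20 _].
  by apply: (tri_ext sg uni n4 H c01 c12 c02 e01 e12); rewrite sym.
move=> cs; have cs' := cs.
move: cs; rewrite /is_graph_cycle /= !inE !negb_or.
case/and5P => [/and5P [/and4P [c01 c02 c03 _] /and3P [c12 c13 _] /andP [c23 _] _ _]].
move=> e01 e12 e23 _.
case E02: (e c0 c2).
  exact: (tri_ext sg uni n4 H c01 c12 c02 e01 e12 E02).
case E13: (e c1 c3).
  exact: (tri_ext sg uni n4 H c12 c23 c13 e12 e23 E13).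
have e03 : e c0 c3.
  have := H c0 c3 c1 e01; rewrite E13 orbF; apply; by rewrite eq_sym.
have Q := quad_cycle sym c01 c02 c03 c12 c13 c23 e01 e12 e23 (etrans (sym _ _) e03).
have [f fn] := (@outside n [:: c0; c1; c2; c3]) n5.
have fnot : forall s, is_graph_cycle e s -> f \in s -> False.
  move=> s' cs2 fs; move: fn; by rewrite (uni_vert uni Q cs2 fs).
move: fn; rewrite !inE !negb_or => /and4P [f0 f1 f2 f3].
have := H c0 f c1 e01 f0 f1; have := H c1 f c2 e12 f1 f2.
have := H c2 f c3 e23 f2 f3; have := H c0 f c3 e03 f0 f3.
have Kt : forall p q, p != q -> f != p -> f != q -> e p q -> e p f -> e q f -> False.
  move=> p q pq fp fq epq epf eqf.
  by apply: (tri_ext sg uni n4 H pq _ _ epq eqf epf); rewrite eq_sym.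
case E0: (e c0 f); case E1: (e c1 f); case E2: (e c2 f); case E3: (e c3 f) => //= _ _ _ _.
all: try exact: (Kt c0 c1).
all: try exact: (Kt c1 c2).
all: try exact: (Kt c2 c3).
all: try exact: (Kt c0 c3).
- apply: (fnot [:: c0; c1; c2; f]); last by rewrite !inE eqxx !orbT.
  apply: quad_cycle => //; try by rewrite eq_sym. by rewrite sym.
- apply: (fnot [:: c0; c1; f; c3]); last by rewrite !inE eqxx !orbT.
  apply: quad_cycle => //; try by rewrite eq_sym. all: by rewrite sym.
Qed.

Lemma sum3 (R : nmodType) n (f : 'I_n -> R) a b c :
  a != b -> a != c -> b != c ->
  (forall q, q != a -> q != b -> q != c -> f q = 0) ->
  \sum_q f q = f a + f b + f c.
Proof.
move=> ab ac bc H.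
rewrite (bigD1 a) //= (bigD1 b) /=; last by rewrite eq_sym ab.
rewrite (bigD1 c) /=; last by rewrite eq_sym ac eq_sym bc.
rewrite big1 ?addr0 ?addrA // => q /andP [/andP [qa qb] qc].
exact: H.
Qed.

Lemma sum_ind (R : pzSemiRingType) n (v : 'I_n) (c : R) :
  \sum_q ((q == v)%:R * c) = c.
Proof.
rewrite (bigD1 v) //= eqxx mul1r big1 ?addr0 // => q /negbTE ->.
by rewrite mul0r.
Qed.

Lemma VP (R : rcfType) n (A : 'M[R]_n) lam :
  A^T = A -> (forall mu, eigenvalue A mu -> lam <= mu) ->
  forall y : 'cV[R]_n, lam * (y^T *m y) 0 0 <= (y^T *m A *m y) 0 0.
Proof.
move=> Asym Hmin y.
pose Ac := map_mx (real_complex R) A.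
have Areal : Ac \is a mxOver Num.real.
  by apply/mxOverP => i j; rewrite mxE /= complex_real.
have Asymc : Ac \is symmetricmx.
  apply/is_hermitianmxP; rewrite expr0 scale1r.
  by apply/matrixP => i j; rewrite !mxE /=; congr (_%:C)%C; rewrite -[in RHS]Asym mxE.
have Aherm := realsym_hermsym Asymc Areal.
have /orthomx_spectralP HA := hermitian_normalmx Aherm.
move: HA; set P := spectralmx Ac; set d := spectral_diag Ac => HA.
have Pu : P \is unitarymx := spectral_unitarymx Ac.
have dreal := hermitian_spectral_diag_real Aherm.
have PPt : P *m map_mx conjC (P^T) = 1%:M by apply/unitarymxP.
have PtP : map_mx conjC (P^T) *m P = 1%:M by apply: mulmx1C.
rewrite (invmx_unitary Pu) in HA.
have dge : forall i, lam%:C%C <= d 0 i.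
  move=> i; have di_real : d 0 i \is Num.real := mxOverP dreal 0 i.
  rewrite -(RRe_real di_real) lecR; apply: Hmin.
  rewrite eigenvalue_root_char -(fmorph_root (real_complex R)) map_char_poly.
  rewrite -eigenvalue_root_char.
  have E : (complex.Re (d 0 i))%:C%C = d 0 i := RRe_real di_real.
  suff Hd : eigenvalue Ac (d 0 i).
    by rewrite -E in Hd; exact: Hd.
  apply/eigenvalueP; exists ('e_i *m P).
    rewrite HA !mulmxA -(mulmxA _ P) PPt mulmx1 -[_ *m diag_mx d]rowE row_diag_mx.
    by rewrite scalemxAl.
  apply/eqP => H0.
  move: (congr1 (fun M => M *m map_mx conjC (P^T)) H0) => /=.
  rewrite mul0mx -mulmxA PPt mulmx1 => /matrixP /(_ 0 i); rewrite !mxE !eqxx /=.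
  by move/eqP; rewrite oner_eq0.
pose yc := map_mx (real_complex R) y.
have ycreal : map_mx conjC yc = yc.
  apply: realmxC; by apply/mxOverP => i j; rewrite mxE /= complex_real.
have E1 : ((y^T *m A *m y) 0 0)%:C%C = (yc^T *m Ac *m yc) 0 0.
  by rewrite /yc /Ac map_trmx -!map_mxM [RHS]mxE.
have E2 : ((y^T *m y) 0 0)%:C%C = (yc^T *m yc) 0 0.
  by rewrite /yc map_trmx -!map_mxM [RHS]mxE.
have M : forall a b : R, ((a * b)%:C = a%:C * b%:C)%C by move=> a b; simpc.
rewrite -lecR M E1 E2.
pose z := P *m yc.
have Ez : yc^T *m map_mx conjC (P^T) = map_mx conjC (z^T).
  by rewrite /z trmx_mul map_mxM -[map_mx conjC yc^T]map_trmx ycreal.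
have -> : yc^T *m Ac *m yc = map_mx conjC (z^T) *m diag_mx d *m z.
  by rewrite HA -Ez /z !mulmxA.
have -> : yc^T *m yc = map_mx conjC (z^T) *m z.
  by rewrite -Ez /z -mulmxA (mulmxA _ P) PtP mul1mx.
rewrite !mxE mulr_sumr; apply: ler_sum => j _.
rewrite mul_mx_diag !mxE.
rewrite [conjC _ * d 0 j]mulrC -mulrA [conjC _ * _]mulrC.
by apply: ler_wpM2r; [apply: mul_conjC_ge0 | apply: dge].
Qed.

Lemma key (R : rcfType) n (e : rel 'I_n) (lam : R) (Y : 'cV[R]_n) :
  (4 < n)%N -> simple_graph e -> unicyclic e -> lam < -1 -> Y != 0 ->
  adj_mx R (compl_graph e) *m Y = lam *: Y ->
  (2 <= #|[set i : 'I_n | (0 < Y i ord0)%R]|)%N.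
Proof.
move=> n5 sg uni lt1 Y0 HY; have [irr sym] := sg.
have eqn : forall u, \sum_q ((u != q) && ~~ e u q)%:R * Y q ord0 = lam * Y u ord0.
  move=> u; move/matrixP: HY => /(_ u 0); rewrite !mxE => <-.
  by apply: eq_bigr => q _; rewrite mxE.
have lam0 : lam < 0 by lra.
rewrite leqNgt; apply/negP => Hc.
have [c0|c1] : #|[set i : 'I_n | (0 < Y i ord0)%R]| = 0%N \/ #|[set i : 'I_n | (0 < Y i ord0)%R]| = 1%N.
- by move: Hc; case: #|_| => [|[|]]; auto.
- have allneg : forall q, Y q ord0 <= 0.
    move=> q; move/eqP: c0; rewrite cards_eq0 => /eqP /setP /(_ q).
    by rewrite !inE => /negbT; rewrite -leNgt.
  have [p Yp] : exists p, Y p ord0 != 0.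
    apply/existsP; apply: contraT; rewrite negb_exists => /forallP H.
    move/negP: Y0 => H0; exfalso; apply: H0; apply/eqP.
    apply/matrixP => i j; rewrite ord1 mxE; move: (H i); rewrite negbK => /eqP H1; exact: H1.
  have Yp' : Y p ord0 < 0 by rewrite lt_neqAle Yp allneg.
  have : \sum_q ((p != q) && ~~ e p q)%:R * Y q ord0 <= 0.
    apply: sumr_le0 => q _; apply: mulr_ge0_le0 => //; exact: ler0n.
  rewrite eqn; nra.
have [v Hv] : exists v, [set i | (0 < Y i ord0)%R] = [set v] by apply/cards1P/eqP.
have posE : forall q, (0 < Y q ord0) = (q == v) by move=> q; rewrite -in_set1 -Hv inE.
have av : 0 < Y v ord0 by rewrite posE.
have npos : forall q, q != v -> Y q ord0 <= 0 by move=> q qv; rewrite leNgt posE (negbTE qv).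
have nb : forall u, e u v -> Y u ord0 = 0 /\ (forall q, q != u -> ~~ e u q -> Y q ord0 = 0).
  move=> u euv; have uv : u != v by apply: contraTneq euv => ->; rewrite irr.
  have tle : forall q, 0 <= - (((u != q) && ~~ e u q)%:R * Y q ord0).
    move=> q; rewrite oppr_ge0; case: (eqVneq q v) => [->|qv]; first by rewrite euv andbF mul0r.
    apply: mulr_ge0_le0; [exact: ler0n | exact: npos].
  have S0 : 0 <= \sum_q - (((u != q) && ~~ e u q)%:R * Y q ord0) by apply: sumr_ge0 => q _; exact: tle.
  have Yu : Y u ord0 = 0.
    have := npos u uv; move: S0; rewrite sumrN eqn => ? ?; nra.
  split => // q qu equ.
  have Hs : \sum_q - (((u != q) && ~~ e u q)%:R * Y q ord0) = 0 by rewrite sumrN eqn Yu mulr0 oppr0.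
  move/(psumr_eq0P (fun q _ => tle q)): Hs => /(_ q isT).
  by rewrite eq_sym qu equ /= mul1r => /eqP; rewrite oppr_eq0 => /eqP.
have [u0 eu0] : exists u0, e u0 v.
  have n1 : (size [:: v] < n)%N by apply: leq_trans n5.
  have [w wn] := outside n1.
  have := (uni.1 v w); case/connectP => [[|z p]] /=.
    by move=> _ wv; move: wn; rewrite wv inE eqxx.
  by case/andP => evz _ _; exists z; rewrite sym.
have [Yu0 nbu0] := nb u0 eu0.
have negP1 : forall w, Y w ord0 < 0 ->
    [/\ w != v, ~~ e w v, e u0 w & w != u0].
  move=> w wn; have wv : w != v by apply: contraTneq wn => ->; rewrite -leNgt ltW.
  have ewv : ~~ e w v by apply/negP => /nb [H _]; move: wn; rewrite H ltxx.
  have wu0 : w != u0 by apply: contraTneq wn => ->; rewrite Yu0 ltxx.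
  have eu0w : e u0 w by apply/negPn/negP => H; move: wn; rewrite (nbu0 w wu0 H) ltxx.
  by split.
have zero : forall q, q != v -> ~~ (Y q ord0 < 0) -> Y q ord0 = 0.
  move=> q qv; rewrite -leNgt => H; apply/eqP; rewrite eq_le H npos //.
have eqv : \sum_q (if q == v then 0 else Y q ord0) = lam * Y v ord0.
  rewrite -eqn; apply: eq_bigr => q _; case: (eqVneq q v) => [->|qv].
    by rewrite mul0r.
  case: (boolP (Y q ord0 < 0)) => [qn|qn].
    have [_ eqv' _ _] := negP1 q qn.
    by rewrite /= sym (negbTE eqv') /= mul1r.
  by rewrite zero // mulr0.
have nn : forall u, Y u ord0 < 0 -> exists u', Y u' ord0 < 0 /\ e u u'.
  move=> u un; case: (boolP [exists u', (Y u' ord0 < 0) && e u u']).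
    by case/existsP => u' /andP [? ?]; exists u'.
  rewrite negb_exists => /forallP Hiso; exfalso.
  have [uv euv _ _] := negP1 u un.
  have : \sum_q ((u != q) && ~~ e u q)%:R * Y q ord0 =
     \sum_q ((if q == v then 0 else Y q ord0) + (q == v)%:R * Y v ord0 - (q == u)%:R * Y u ord0).
    apply: eq_bigr => q _; case: (eqVneq q v) => [->|qv].
      by rewrite uv (negbTE euv) eq_sym (negbTE uv) /= !mul1r mul0r add0r subr0.
    case: (eqVneq q u) => [->|qu].
      by rewrite /=; ring.
    rewrite /= !mul0r addr0 subr0.
    case: (boolP (Y q ord0 < 0)) => [qn|qn].
      by move: (Hiso q); rewrite qn /= => /negbTE ->; rewrite mul1r.
    by rewrite zero // mulr0.
  rewrite eqn big_split /= big_split /= sumrN eqv !sum_ind => H.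
  have := av; move: H un; set yu := Y u ord0; set a := Y v ord0 => H un av'; nra.
have [w1 w1n] : exists w1, Y w1 ord0 < 0.
  apply/existsP; apply: contraT; rewrite negb_exists => /forallP H.
  have : \sum_q (if q == v then 0 else Y q ord0) = 0.
    by apply: big1 => q _; case: ifP => // /negbT qv; apply: zero.
  rewrite eqv => H0; exfalso; move: H0 av lam0; set a := Y v ord0 => ? ? ?; nra.
have [w2 [w2n e12]] := nn w1 w1n.
have [w1v ew1v eu0w1 w1u0] := negP1 w1 w1n.
have [w2v ew2v eu0w2 w2u0] := negP1 w2 w2n.
have w12 : w1 != w2 by apply: contraTneq e12 => ->; rewrite irr.
have u0w1 : u0 != w1 by rewrite eq_sym.
have u0w2 : u0 != w2 by rewrite eq_sym.
have T0 := tri_cycle sym u0w1 w12 u0w2 eu0w1 e12 eu0w2.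
have inS : forall u, Y u ord0 < 0 -> (u == w1) || (u == w2).
  move=> u un; have [u' [u'n euu']] := nn u un.
  have [_ _ eu0u uu0] := negP1 u un; have [_ _ eu0u' u'u0] := negP1 u' u'n.
  have uu' : u != u' by apply: contraTneq euu' => ->; rewrite irr.
  have u0u : u0 != u by rewrite eq_sym.
  have u0u' : u0 != u' by rewrite eq_sym.
  have T1 := tri_cycle sym u0u uu' u0u' eu0u euu' eu0u'.
  have : u \in [:: u0; w1; w2] by apply: (uni_vert uni T0 T1); rewrite !inE eqxx orbT.
  by rewrite !inE (negbTE uu0).
have zero3 : forall q, q != v -> q != w1 -> q != w2 -> Y q ord0 = 0.
  move=> q qv q1 q2; apply: zero => //; apply/negP => qn.
  by move: (inS q qn); rewrite (negbTE q1) (negbTE q2).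
have vw1 : v != w1 by rewrite eq_sym.
have vw2 : v != w2 by rewrite eq_sym.
have s3 : forall p, \sum_q ((p != q) && ~~ e p q)%:R * Y q ord0 =
   ((p != v) && ~~ e p v)%:R * Y v ord0 + ((p != w1) && ~~ e p w1)%:R * Y w1 ord0
   + ((p != w2) && ~~ e p w2)%:R * Y w2 ord0.
  by move=> p; apply: sum3 => // q qv q1 q2; rewrite zero3 // mulr0.
have E1 := eqn w1; rewrite s3 w1v ew1v eqxx e12 /= andbF in E1.
have E2 := eqn w2; rewrite s3 w2v ew2v eqxx (sym w2 w1) e12 eq_sym w12 /= in E2.
have Ev := eqn v; rewrite s3 eqxx vw1 vw2 (sym v w1) (sym v w2) ew1v ew2v /= in Ev.
move: E1 E2 Ev; rewrite ?mulr1n ?mulr0n ?mul1r ?mul0r ?addr0 ?add0r => E1 E2 Ev.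
have n4 : (size [:: v; u0; w1; w2] < n)%N by [].
have [z zn] := outside n4.
have zn' := zn; move: zn'; rewrite !inE !negb_or => /and4P [zv zu0 zw1 zw2].
have Yz : Y z ord0 = 0 := zero3 z zv zw1 zw2.
have Ez := eqn z; rewrite s3 zv zw1 zw2 Yz mulr0 /= in Ez.
have notT : ~~ (e z w1 && e z w2).
  apply/andP => [[h1 h2]].
  have T2 := tri_cycle sym zw1 w12 zw2 h1 e12 h2.
  have : z \in [:: u0; w1; w2] by apply: (uni_vert uni T0 T2); rewrite !inE eqxx.
  by rewrite !inE (negbTE zu0) (negbTE zw1) (negbTE zw2).
case: (boolP (e z v)) => ezv.
  have [_ H] := nb z ezv; move: notT; rewrite negb_and => /orP [] h.
    by move: w1n; rewrite (H w1 _ h) ?ltxx // eq_sym.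
  by move: w2n; rewrite (H w2 _ h) ?ltxx // eq_sym.
move: Ez notT; rewrite ezv /=.
case: (e z w1); case: (e z w2) => //= Ez _;
  move: Ez E1 E2 Ev av w1n w2n; rewrite ?mulr1n ?mulr0n ?mul1r ?mul0r ?addr0 ?add0r;
  set a := Y v ord0; set x1 := Y w1 ord0; set x2 := Y w2 ord0 => *; nra.


Qed.

Theorem lemma3p3 (R : rcfType) (n : nat) (e : rel 'I_n) (lam : R) (X : 'cV[R]_n) :
  (5 <= n)%N ->
  simple_graph e ->
  unicyclic e ->
  least_eigenvalue (adj_mx R (compl_graph e)) lam ->
  X != 0 ->
  adj_mx R (compl_graph e) *m X = lam *: X ->
  (2 <= #|[set i : 'I_n | (0 < X i ord0)%R]|)%N /\ (2 <= #|[set i : 'I_n | (X i ord0 < 0)%R]|)%N.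
Proof.
move=> n5 sg uni [eigl minl] X0 HX.
have [irr sym] := sg.
have Asym : (adj_mx R (compl_graph e))^T = adj_mx R (compl_graph e).
  by apply/matrixP => i j; rewrite !mxE /compl_graph /= eq_sym sym.
have lt1 : lam < -1.
  have [i [j [k [eik eij ekj ji jk]]]] := p3 sg uni n5.
  have ik : i != k by apply: contraTneq eik => ->; rewrite irr.
  have ij : i != j by rewrite eq_sym.
  pose y : 'cV[R]_n := \col_p ((p == i)%:R + (p == k)%:R - 2%:R * (p == j)%:R).
  have yi : y i 0 = 1 by rewrite mxE eqxx (negbTE ik) (negbTE ij) /=; ring.
  have yk : y k 0 = 1 by rewrite mxE eqxx (eq_sym k i) (negbTE ik) (eq_sym k j) (negbTE jk) /=; ring.
  have yj : y j 0 = -2 by rewrite mxE eqxx (negbTE ji) (negbTE jk) /=; ring.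
  have y0 : forall q, q != i -> q != j -> q != k -> y q 0 = 0.
    by move=> q qi qj qk; rewrite mxE (negbTE qi) (negbTE qj) (negbTE qk) /=; ring.
  have ex : forall M : 'M[R]_n, (y^T *m M *m y) 0 0 =
      \sum_q (\sum_p y p 0 * M p q) * y q 0.
    move=> M; rewrite mxE; apply: eq_bigr => q _; rewrite mxE; congr (_ * _).
    by apply: eq_bigr => p _; rewrite mxE.
  have ex3 : forall M : 'M[R]_n, (y^T *m M *m y) 0 0 =
      (M i i + M j i * -2 + M k i) + (M i j + M j j * -2 + M k j) * -2
      + (M i k + M j k * -2 + M k k).
    move=> M; rewrite ex (@sum3 _ _ _ i j k) //; last first.
      by move=> q qi qj qk; rewrite y0 // mulr0.
    have inner : forall q, \sum_p y p 0 * M p q = M i q + M j q * -2 + M k q.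
      move=> q; rewrite (@sum3 _ _ _ i j k) //; last first.
        by move=> p pi pj pk; rewrite y0 // mul0r.
      by rewrite yi yj yk !mul1r mulrC.
    by rewrite !inner yi yj yk !mulr1.
  have := @VP _ _ _ _ Asym minl y.
  have -> : y^T *m y = y^T *m 1%:M *m y by rewrite mulmx1.
  rewrite !ex3 !mxE /compl_graph /= !eqxx eik ekj eij (negbTE ij) (negbTE ik) (negbTE jk).
  rewrite (eq_sym j i) (eq_sym k i) (eq_sym k j) (negbTE ij) (negbTE ik) (negbTE jk).
  rewrite (sym k i) eik (sym j i) (sym j k) eij ekj /=.
  move=> H; lra.
split.
  by apply: key lt1 X0 HX.
have -> : [set i : 'I_n | (X i ord0 < 0)%R] = [set i : 'I_n | (0 < (- X) i ord0)%R].
  by apply/setP => i; rewrite !inE mxE oppr_gt0.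
apply: (key n5 sg uni lt1); first by rewrite oppr_eq0.
by rewrite mulmxN HX scalerN.
Qed.
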